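(* Let $K\ge 2$, let $\mathcal{D}$ be a probability distribution on $\mathcal{X}\times\mathcal{Y}$ with $\mathcal{Y}=\{1,\dots,K\}$, and let $\rho$ be a probability distribution over classifiers $h:\mathcal{X}\to\mathcal{Y}$. Then $$\mathbb{E}_{h,h'\sim\rho}[L(h,h')]\;\le\;\frac{2(K-1)}{K}\Big(\mathbb{E}_{h\sim\rho}[L(h)]-\tfrac12\,\mathbb{E}_{h,h'\sim\rho}[D(h,h')]\Big),$$ where $h,h'$ are drawn independently from $\rho$.
   Context: The error rate is $L(h)=\mathbb{E}_{(X,Y)\sim\mathcal{D}}[\mathbb{1}(h(X)\neq Y)]$; the tandem loss is $L(h,h')=\mathbb{E}_{(X,Y)\sim\mathcal{D}}[\mathbb{1}(h(X)\neq Y)\mathbb{1}(h'(X)\neq Y)]$; the disagreement rate is $D(h,h')=\mathbb{E}_{X\sim\mathcal{D}}[\mathbb{1}(h(X)\neq h'(X))]$. *)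

(* Defs.v *)
From HB Require Import structures.
From mathcomp Require Import all_boot all_order all_algebra.
From mathcomp Require Import all_classical all_reals all_analysis.
Set Implicit Arguments. Unset Strict Implicit. Unset Printing Implicit Defensive.
Import Order.TTheory GRing.Theory Num.Theory.
Local Open Scope classical_set_scope.
Local Open Scope ring_scope.

(* Label set Y = {1,...,K} with K = k.+2 (i.e. K >= 2), represented by 'I_(k.+2),
   equipped with the discrete sigma-algebra. *)
Definition label (k : nat) : Type := 'I_k.+2.
HB.instance Definition _ k := Choice.on (label k).
HB.instance Definition _ k := isPointed.Build (label k) ord0.
HB.instance Definition _ k := @isMeasurable.Build default_measure_display
  (label k) discrete_measurable discrete_measurable0
  discrete_measurableC discrete_measurableU.

Local Open Scope ereal_scope.

Definition err_rate {dX} {X : measurableType dX} {k : nat} {R : realType}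
  (D : probability (X * label k)%type R) (h : X -> label k) : \bar R :=
  \int[D]_z ((h z.1 != z.2)%:R)%:E.

Definition tandem_loss {dX} {X : measurableType dX} {k : nat} {R : realType}
  (D : probability (X * label k)%type R) (h h' : X -> label k) : \bar R :=
  \int[D]_z ((h z.1 != z.2)%:R * (h' z.1 != z.2)%:R)%:E.

Definition disagreement {dX} {X : measurableType dX} {k : nat} {R : realType}
  (D : probability (X * label k)%type R) (h h' : X -> label k) : \bar R :=
  \int[D]_z ((h z.1 != h' z.1)%:R)%:E.

(* Main.v *)
Require Import Defs.
From HB Require Import structures.
From mathcomp Require Import all_boot all_order all_algebra.
From mathcomp Require Import all_classical all_reals all_analysis.
From mathcomp Require Import measurable_realfun.
From mathcomp Require Import ring lra.
Import Order.TTheory GRing.Theory Num.Theory.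
Local Open Scope classical_set_scope.
Local Open Scope ring_scope.
Set Implicit Arguments.
Section S4.
Variables (R : realFieldType) (k : nat).

Lemma sum_neq (p : label k -> R) (y : label k) :
  \sum_(j : label k) (j != y)%:R * p j = \sum_j p j - p y.
Proof.
rewrite [X in _ = X - _](bigD1 y) //= addrC addrK.
rewrite (bigD1 y) //= eqxx mul0r add0r.
by apply: eq_bigr => j ->; rewrite mul1r.
Qed.

Lemma sum_cnt (y : label k) : \sum_(j : label k) ((j != y)%:R : R) = k.+1%:R.
Proof.
have := sum_neq (fun _ => 1) y.
under eq_bigr do rewrite mulr1.
move=> ->; rewrite sumr_const card_ord -mulr_natr mul1r.
by rewrite -addn1 natrD addrK.
Qed.

Lemma key (p : label k -> R) (p0 : forall j, 0 <= p j) (p1 : \sum_j p j = 1)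
  (y : label k) (S Dg : R)
  (eS : S = \sum_(j : label k) (j != y)%:R * p j)
  (eD : Dg = \sum_(j' : label k) (\sum_(j : label k) (j' != j)%:R * p j) * p j') :
  S * S + (2 * (k.+2 - 1)%:R / k.+2%:R) * 2^-1 * Dg <=
  (2 * (k.+2 - 1)%:R / k.+2%:R) * S.
Proof.
set Q := \sum_(j : label k) (j != y)%:R * (p j ^+ 2).
have hS : S = 1 - p y by rewrite eS sum_neq p1.
have hsq : \sum_(j : label k) p j ^+ 2 = p y ^+ 2 + Q.
  by rewrite /Q sum_neq addrC subrK.
have hD : Dg = 1 - (p y ^+ 2 + Q).
  rewrite eD -hsq.
  transitivity (\sum_(j' : label k) (p j' - p j' ^+ 2)).
    apply: eq_bigr => j' _.
    under eq_bigr do rewrite eq_sym.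
    by rewrite sum_neq p1 mulrBl mul1r expr2.
  by rewrite sumrB p1.
have n0 : (0 < k.+1%:R :> R) by rewrite ltr0n.
have CS : S ^+ 2 <= k.+1%:R * Q.
  have h0 : 0 <= \sum_(j : label k) (j != y)%:R * (k.+1%:R * p j - S) ^+ 2.
    by apply: sumr_ge0 => j _; rewrite mulr_ge0 // sqr_ge0.
  have e : \sum_(j : label k) (j != y)%:R * (k.+1%:R * p j - S) ^+ 2 =
     k.+1%:R ^+ 2 * Q - 2 * k.+1%:R * S * S + S ^+ 2 * k.+1%:R.
    transitivity (\sum_(j : label k) (k.+1%:R ^+ 2 * ((j != y)%:R * p j ^+ 2)
        - 2 * k.+1%:R * S * ((j != y)%:R * p j) + S ^+ 2 * (j != y)%:R)).
      by apply: eq_bigr => j _; ring.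
    by rewrite big_split /= sumrB -!mulr_sumr sum_cnt -eS.
  rewrite e in h0.
  have : 0 <= k.+1%:R * (k.+1%:R * Q - S ^+ 2) by rewrite mulrBr; lra.
  by rewrite pmulr_rge0 // subr_ge0.
have -> : (k.+2 - 1)%N = k.+1 by rewrite subn1.
have e2 : k.+2%:R = k.+1%:R + 1 :> R by rewrite -addn1 natrD.
rewrite e2 -subr_ge0.
have -> : 2 * k.+1%:R / (k.+1%:R + 1) * S - (S * S + 2 * k.+1%:R / (k.+1%:R + 1) / 2 * Dg)
   = (k.+1%:R * Q - S ^+ 2) / (k.+1%:R + 1).
  rewrite hD hS; set n := k.+1%:R; set q := p y.
  have n1 : n + 1 != 0 by rewrite gt_eqF // ltr_wpDl // ltW.
  field.
  have hk : (0 <= k%:R :> R) by rewrite ler0n.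
  apply/eqP => h; lra.
by rewrite divr_ge0 // ?subr_ge0 // addr_ge0 // ltW.
Qed.
Lemma bnds (p : label k -> R) (p0 : forall j, 0 <= p j) (p1 : \sum_j p j = 1)
  (y : label k) (S Dg : R)
  (eS : S = \sum_(j : label k) (j != y)%:R * p j)
  (eD : Dg = \sum_(j' : label k) (\sum_(j : label k) (j' != j)%:R * p j) * p j') :
  [/\ 0 <= S, S <= 1, 0 <= Dg & Dg <= 1].
Proof.
have hS : S = 1 - p y by rewrite eS sum_neq p1.
have hD : Dg = \sum_(j' : label k) (p j' - p j' ^+ 2).
  rewrite eD; apply: eq_bigr => j' _.
  under eq_bigr do rewrite eq_sym.
  by rewrite sum_neq p1 mulrBl mul1r expr2.
have py := p0 y.
have S0 : 0 <= S by rewrite eS; apply: sumr_ge0 => j _; rewrite mulr_ge0.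
have D0 : 0 <= Dg.
  rewrite eD; apply: sumr_ge0 => j _; rewrite mulr_ge0 //.
  by apply: sumr_ge0 => i _; rewrite mulr_ge0.
split => //; first lra.
rewrite hD sumrB p1 lerBlDr lerDl.
by apply: sumr_ge0 => j _; rewrite sqr_ge0.
Qed.
End S4.

Local Open Scope ereal_scope.
Section S.
Variables (R : realType) (k : nat).

Lemma mlab d (T : measurableType d) (f : label k -> T) : measurable_fun setT f.
Proof. by move=> _ Y _; exact: I. Qed.

Lemma eq_sum_ind (a b : label k) :
  ((a == b)%:R : R) = (\sum_(j : label k) (a == j)%:R * (b == j)%:R)%R.
Proof.
rewrite (bigD1 a) //= eqxx mul1r big1 ?addr0; first by rewrite eq_sym.
by move=> j; rewrite eq_sym => /negbTE ->; rewrite mul0r.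
Qed.

Lemma meas_eq d (T : measurableType d) (f1 f2 : T -> label k) :
  measurable_fun setT f1 -> measurable_fun setT f2 ->
  measurable_fun setT (fun t => ((f1 t == f2 t)%:R : R)).
Proof.
move=> m1 m2.
rewrite (_ : (fun t => _) = fun t => (\sum_(j : label k) (f1 t == j)%:R * (f2 t == j)%:R)%R); last first.
  by apply/funext => t; rewrite eq_sum_ind.
apply: measurable_sum => j.
have h1 : measurable_fun setT (fun t => ((f1 t == j)%:R : R)).
  pose g := fun a : label k => ((a == j)%:R : R).
  have mg : measurable_fun setT g by exact: mlab.
  have := measurableT_comp mg m1. exact.
have h2 : measurable_fun setT (fun t => ((f2 t == j)%:R : R)).
  pose g := fun a : label k => ((a == j)%:R : R).
  have mg : measurable_fun setT g by exact: mlab.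
  have := measurableT_comp mg m2. exact.
exact: (measurable_realfun.measurable_funM h1 h2).
Qed.

Lemma meas_neq d (T : measurableType d) (f1 f2 : T -> label k) :
  measurable_fun setT f1 -> measurable_fun setT f2 ->
  measurable_fun setT (fun t => ((f1 t != f2 t)%:R : R)).
Proof.
move=> m1 m2.
rewrite (_ : (fun t => _) = fun t => (1 - (f1 t == f2 t)%:R)%R); last first.
  by apply: boolp.funext => t; case: (f1 t == f2 t); rewrite /= ?subrr ?subr0.
have := measurable_realfun.measurable_funB (f := cst 1%R) (measurable_cst _) (meas_eq m1 m2). exact.
Qed.

End S.

Section S2.
Variables (R : realType) (k : nat).
Variables (dH : measure_display) (H : measurableType dH) (rho : probability H R).

Lemma int_ind_fin (f : H -> label k) (mf : measurable_fun setT f) (j : label k) :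
  \int[rho]_h ((f h == j)%:R)%:E \is a fin_num.
Proof.
have mi : measurable_fun setT (fun h => (((f h == j)%:R : R)%:E : \bar R)).
  apply/measurable_EFinP.
  pose g := fun a : label k => ((a == j)%:R : R).
  have mg : measurable_fun setT g by exact: mlab.
  have := measurableT_comp mg mf. exact.
rewrite ge0_fin_numE; last by apply: integral_ge0 => h _; rewrite lee_fin.
apply: (@le_lt_trans _ _ (\int[rho]_h (cst 1%R h)%:E)).
  apply: ge0_le_integral => //.
  - by apply/measurable_EFinP; exact: measurable_cst.
  - by move=> h _; rewrite lee_fin; case: (f h == j).
rewrite (_ : \int[rho]_h (cst 1%R h)%:E = \int[rho]_h (cst (1%:E : \bar R)) h) //.
rewrite integral_cst // mul1e; apply: (le_lt_trans (probability_le1 rho measurableT)); exact: ltry.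
Qed.

Definition pr (f : H -> label k) (j : label k) : R :=
  fine (\int[rho]_h ((f h == j)%:R)%:E).

Lemma int_lab (g : label k -> R) (g0 : forall j, (0 <= g j)%R)
  (f : H -> label k) (mf : measurable_fun setT f) :
  \int[rho]_h (g (f h))%:E = (\sum_(j : label k) g j * pr f j)%:E.
Proof.
have e h : (g (f h))%:E = \sum_(j : label k) (g j)%:E * ((f h == j)%:R)%:E.
  rewrite (bigD1 (f h)) //= eqxx mule1 big1 ?adde0 //.
  by move=> j; rewrite eq_sym => /negbTE ->; rewrite mule0.
under eq_integral do rewrite e.
rewrite ge0_integral_sum //; last first.
  - by move=> j h _; rewrite -EFinM lee_fin mulr_ge0.
  - move=> j; apply/measurable_EFinP.
    pose g' := fun a : label k => ((g j * (a == j)%:R)%R : R).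
    have mg : measurable_fun setT g' by exact: mlab.
    have := measurableT_comp mg mf. exact.
rewrite -sumEFin; apply: eq_bigr => j _.
rewrite ge0_integralZl_EFin //.
rewrite /pr EFinM fineK ?int_ind_fin //.
apply/measurable_EFinP.
pose g' := fun a : label k => (((a == j)%:R)%R : R).
have mg : measurable_fun setT g' by exact: mlab.
have := measurableT_comp mg mf. exact.
Qed.

Lemma int1 : \int[rho]_h (cst (1%:E : \bar R)) h = 1.
Proof. by rewrite integral_cst // mul1e; exact: probability_setT. Qed.

Lemma pr_sum (f : H -> label k) (mf : measurable_fun setT f) :
  (\sum_(j : label k) pr f j = 1)%R.
Proof.
have := @int_lab (fun _ => 1%R) (fun _ => ler01) f mf.
rewrite (_ : \int[rho]_h ((fun _ => 1%R) (f h))%:E = \int[rho]_h (cst (1%:E : \bar R)) h) //.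
rewrite int1 => /esym/eqP.
by rewrite eqe => /eqP <-; apply: eq_bigr => j _; rewrite mul1r.
Qed.

Lemma pr_ge0 (f : H -> label k) j : (0 <= pr f j)%R.
Proof. by rewrite /pr fine_ge0 // integral_ge0 // => h _; rewrite lee_fin. Qed.

End S2.

Section S3.
Variables (R : realType).
Variables (dH : measure_display) (H : measurableType dH) (rho : probability H R).
Variables (dZ : measure_display) (Z : measurableType dZ) (D : probability Z R).

Lemma swap2 (F : H -> Z -> \bar R) (F0 : forall h z, 0 <= F h z)
  (mF : measurable_fun setT (fun q : H * Z => F q.1 q.2)) :
  \int[rho]_h \int[D]_z F h z = \int[D]_z \int[rho]_h F h z.
Proof.
exact: (fubini_tonelli (fun q : H * Z => F q.1 q.2) mF (fun q => F0 q.1 q.2)).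
Qed.

Lemma swap3 (F : H -> H -> Z -> \bar R) (F0 : forall h h' z, 0 <= F h h' z)
  (mF : measurable_fun setT (fun q : (H * H) * Z => F q.1.1 q.1.2 q.2)) :
  \int[rho]_h \int[rho]_h' \int[D]_z F h h' z =
  \int[D]_z \int[rho]_h \int[rho]_h' F h h' z.
Proof.
have e1 h : \int[rho]_h' \int[D]_z F h h' z = \int[D]_z \int[rho]_h' F h h' z.
  apply: swap2 => //.
  have mp : measurable_fun setT (fun q : H * Z => ((h, q.1), q.2)).
    apply: measurable_fun_pair => //.
    by apply: measurable_fun_pair => //; exact: measurable_cst.
  have := measurableT_comp mF mp. exact.
under eq_integral do rewrite e1.
apply: swap2.
  by move=> h z; apply: integral_ge0 => h' _.
have mp : measurable_fun setT (fun q : (H * Z) * H => ((q.1.1, q.2), q.1.2)).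
  apply: measurable_fun_pair => //.
  apply: measurable_fun_pair => //.
  exact: measurableT_comp.
  exact: measurableT_comp.
have := measurable_fun_fubini_tonelli_F (m2 := rho) (fun q : (H * Z) * H => F q.1.1 q.2 q.1.2)
  (measurableT_comp mF mp) (fun q => F0 _ _ _).
exact.
Qed.

Lemma meas2 (F : H -> Z -> \bar R) (F0 : forall h z, 0 <= F h z)
  (mF : measurable_fun setT (fun q : H * Z => F q.1 q.2)) :
  measurable_fun setT (fun z => \int[rho]_h F h z).
Proof.
have := measurable_fun_fubini_tonelli_G (m1 := rho) (fun q : H * Z => F q.1 q.2)
  mF (fun q => F0 _ _).
exact.
Qed.

Lemma meas3 (F : H -> H -> Z -> \bar R) (F0 : forall h h' z, 0 <= F h h' z)
  (mF : measurable_fun setT (fun q : (H * H) * Z => F q.1.1 q.1.2 q.2)) :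
  measurable_fun setT (fun z => \int[rho]_h \int[rho]_h' F h h' z).
Proof.
apply: (@meas2 (fun h z => \int[rho]_h' F h h' z)).
  by move=> h z; apply: integral_ge0 => h' _.
have mp : measurable_fun setT (fun q : (H * Z) * H => ((q.1.1, q.2), q.1.2)).
  apply: measurable_fun_pair => //.
  apply: measurable_fun_pair => //.
  exact: measurableT_comp.
  exact: measurableT_comp.
have := measurable_fun_fubini_tonelli_F (m2 := rho) (fun q : (H * Z) * H => F q.1.1 q.2 q.1.2)
  (measurableT_comp mF mp) (fun q => F0 _ _ _).
exact.
Qed.
Lemma fin01 (P : probability Z R) (g : Z -> R) (mg : measurable_fun setT g)
  (g0 : forall z, (0 <= g z)%R) (g1 : forall z, (g z <= 1)%R) :
  \int[P]_z (g z)%:E \is a fin_num.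
Proof.
rewrite ge0_fin_numE; last by apply: integral_ge0 => z _; rewrite lee_fin.
apply: (@le_lt_trans _ _ (\int[P]_z (cst (1%:E : \bar R)) z)).
  apply: ge0_le_integral => //.
  - by move=> z _; rewrite lee_fin.
  - exact/measurable_EFinP.
  - by move=> z _; rewrite lee_fin.
rewrite integral_cst // mul1e; apply: (le_lt_trans (probability_le1 P measurableT)).
exact: ltry.
Qed.
End S3.

Unset Implicit Arguments.
Theorem lemma4 (R : realType) (k : nat)
  (dX : measure_display) (X : measurableType dX)
  (dH : measure_display) (H : measurableType dH)
  (c : H -> X -> label k)
  (hc : measurable_fun setT (fun p : H * X => c p.1 p.2))
  (D : probability (X * label k)%type R) (rho : probability H R) :
  \int[rho]_h \int[rho]_h' tandem_loss D (c h) (c h')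
  <= ((2 * (k.+2 - 1)%:R / k.+2%:R)%R)%:E *
     (\int[rho]_h err_rate D (c h)
      - (2^-1)%:E * \int[rho]_h \int[rho]_h' disagreement D (c h) (c h')).
Proof.
set cc := (2 * (k.+2 - 1)%:R / k.+2%:R)%R.
have mc d (T : measurableType d) (a : T -> H) (b : T -> X) :
    measurable_fun setT a -> measurable_fun setT b ->
    measurable_fun setT (fun t => c (a t) (b t)).
  move=> ma mb; have := measurableT_comp hc (measurable_fun_pair ma mb). exact.
have mfx x : measurable_fun setT (fun h => c h x).
  by apply: mc => //; exact: measurable_cst.
pose p (z : X * label k) := pr rho (fun h => c h z.1).
pose S z := (\sum_(j : label k) (j != z.2)%:R * p z j)%R.
pose Dg z := (\sum_(j' : label k) (\sum_(j : label k) (j' != j)%:R * p z j) * p z j')%R.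
have psum z : (\sum_j p z j = 1)%R := pr_sum rho (mfx z.1).
have p0 z j : (0 <= p z j)%R := pr_ge0 rho _ j.
have bz z := @bnds _ _ (p z) (p0 z) (psum z) z.2 _ _ (erefl (S z)) (erefl (Dg z)).
have PE z : \int[rho]_h ((c h z.1 != z.2)%:R)%:E = (S z)%:E.
  exact: (int_lab rho (fun j => (j != z.2)%:R) (fun j => ler0n _ _) (mfx z.1)).
have PT z : \int[rho]_h \int[rho]_h' ((c h z.1 != z.2)%:R * (c h' z.1 != z.2)%:R)%:E
    = (S z * S z)%:E.
  have e1 h : \int[rho]_h' ((c h z.1 != z.2)%:R * (c h' z.1 != z.2)%:R)%:E
      = ((c h z.1 != z.2)%:R * S z)%:E.
    rewrite (int_lab rho (fun j => (c h z.1 != z.2)%:R * (j != z.2)%:R)%R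
      (fun j => mulr_ge0 (ler0n _ _) (ler0n _ _)) (mfx z.1)).
    by rewrite /S mulr_sumr; congr (_%:E); apply: eq_bigr => j _; rewrite mulrA.
  under eq_integral do rewrite e1.
  have S0 : (0 <= S z)%R by case: (bz z).
  rewrite (int_lab rho (fun j => (j != z.2)%:R * S z)%R
      (fun j => mulr_ge0 (ler0n _ _) S0) (mfx z.1)).
  by rewrite [in RHS]/S mulr_suml; congr (_%:E); apply: eq_bigr => j _; rewrite mulrAC.
have PD z : \int[rho]_h \int[rho]_h' ((c h z.1 != c h' z.1)%:R)%:E = (Dg z)%:E.
  pose G a := (\sum_(j : label k) (a != j)%:R * p z j)%R.
  have G0 a : (0 <= G a)%R by apply: sumr_ge0 => j _; rewrite mulr_ge0.
  have e1 h : \int[rho]_h' ((c h z.1 != c h' z.1)%:R)%:E = (G (c h z.1))%:E.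
    exact: (int_lab rho (fun j => (c h z.1 != j)%:R) (fun j => ler0n _ _) (mfx z.1)).
  under eq_integral do rewrite e1.
  exact: (int_lab rho G G0 (mfx z.1)).
pose FE := fun (h : H) (z : X * label k) => (((c h z.1 != z.2)%:R : R)%:E).
pose FT := fun (h h' : H) (z : X * label k) =>
  (((c h z.1 != z.2)%:R * (c h' z.1 != z.2)%:R : R)%:E).
pose FD := fun (h h' : H) (z : X * label k) => (((c h z.1 != c h' z.1)%:R : R)%:E).
have mFE : measurable_fun setT (fun q : H * (X * label k) => FE q.1 q.2).
  apply/measurable_EFinP; apply: meas_neq.
    by apply: mc => //; exact: measurableT_comp.
  exact: measurableT_comp.
have mFT : measurable_fun setT (fun q : (H * H) * (X * label k) => FT q.1.1 q.1.2 q.2).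
  apply/measurable_EFinP.
  have m1 : measurable_fun setT (fun q : (H * H) * (X * label k) =>
      ((c q.1.1 q.2.1 != q.2.2)%:R : R)).
    apply: meas_neq; last exact: measurableT_comp.
    by apply: mc; exact: measurableT_comp.
  have m2 : measurable_fun setT (fun q : (H * H) * (X * label k) =>
      ((c q.1.2 q.2.1 != q.2.2)%:R : R)).
    apply: meas_neq; last exact: measurableT_comp.
    by apply: mc; exact: measurableT_comp.
  have := measurable_realfun.measurable_funM m1 m2. exact.
have mFD : measurable_fun setT (fun q : (H * H) * (X * label k) => FD q.1.1 q.1.2 q.2).
  apply/measurable_EFinP; apply: meas_neq.
    by apply: mc; exact: measurableT_comp.
  by apply: mc; exact: measurableT_comp.
have FE0 h z : 0 <= FE h z by rewrite lee_fin.
have FT0 h h' z : 0 <= FT h h' z by rewrite lee_fin mulr_ge0.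
have FD0 h h' z : 0 <= FD h h' z by rewrite lee_fin.
have hL : \int[rho]_h \int[rho]_h' tandem_loss D (c h) (c h') = \int[D]_z (S z * S z)%:E.
  transitivity (\int[D]_z \int[rho]_h \int[rho]_h' FT h h' z).
    have := swap3 rho D FT FT0 mFT. exact.
  by apply: eq_integral => z _; exact: PT.
have hE : \int[rho]_h err_rate D (c h) = \int[D]_z (S z)%:E.
  transitivity (\int[D]_z \int[rho]_h FE h z).
    have := swap2 rho D FE FE0 mFE. exact.
  by apply: eq_integral => z _; exact: PE.
have hD : \int[rho]_h \int[rho]_h' disagreement D (c h) (c h') = \int[D]_z (Dg z)%:E.
  transitivity (\int[D]_z \int[rho]_h \int[rho]_h' FD h h' z).
    have := swap3 rho D FD FD0 mFD. exact.
  by apply: eq_integral => z _; exact: PD.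
have mSE : measurable_fun setT (fun z => (S z)%:E).
  have -> : (fun z => (S z)%:E) = (fun z => \int[rho]_h FE h z).
    by apply: boolp.funext => z; rewrite PE.
  exact: (meas2 rho FE FE0 mFE).
have mDE : measurable_fun setT (fun z => (Dg z)%:E).
  have -> : (fun z => (Dg z)%:E) = (fun z => \int[rho]_h \int[rho]_h' FD h h' z).
    by apply: boolp.funext => z; rewrite PD.
  exact: (meas3 rho FD FD0 mFD).
have mS : measurable_fun setT S by apply/measurable_EFinP.
have mDg : measurable_fun setT Dg by apply/measurable_EFinP.
have mSS : measurable_fun setT (fun z => (S z * S z)%R).
  have := measurable_realfun.measurable_funM mS mS. exact.
rewrite hL hE hD.
have cc0 : (0 <= cc)%R.
  by rewrite /cc divr_ge0 // mulr_ge0.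
have ineq : \int[D]_z ((S z * S z)%:E + (cc * 2^-1)%:E * (Dg z)%:E)
    <= \int[D]_z (cc%:E * (S z)%:E).
  apply: ge0_le_integral => //.
  - move=> z _; apply: adde_ge0; first by rewrite lee_fin; case: (bz z) => S0 *; rewrite mulr_ge0.
    by rewrite -EFinM lee_fin; case: (bz z) => _ _ D0 _; rewrite mulr_ge0 // mulr_ge0.
  - apply: emeasurable_funD; first exact/measurable_EFinP.
    apply/emeasurable_funM => //; exact: measurable_cst.
  - apply/emeasurable_funM => //; exact: measurable_cst.
  - move=> z _; rewrite -!EFinM -EFinD lee_fin.
    exact: (@key _ _ (p z) (p0 z) (psum z) z.2 _ _ (erefl (S z)) (erefl (Dg z))).
have e1 : \int[D]_z ((S z * S z)%:E + (cc * 2^-1)%:E * (Dg z)%:E) =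
    \int[D]_z (S z * S z)%:E + \int[D]_z ((cc * 2^-1)%:E * (Dg z)%:E).
  apply: ge0_integralD => //.
  all: try by (move=> z _; rewrite -?EFinM lee_fin; case: (bz z) => S0 S1 D0 D1; rewrite ?mulr_ge0).
  all: try by (apply/emeasurable_funM => //; exact: measurable_cst).
  all: try by apply/measurable_EFinP.
have e2 : \int[D]_z ((cc * 2^-1)%:E * (Dg z)%:E) = (cc * 2^-1)%:E * \int[D]_z (Dg z)%:E.
  apply: ge0_integralZl_EFin => //; last by rewrite mulr_ge0.
  by move=> z _; rewrite lee_fin; case: (bz z).
have e3 : \int[D]_z (cc%:E * (S z)%:E) = cc%:E * \int[D]_z (S z)%:E.
  apply: ge0_integralZl_EFin => //.
  by move=> z _; rewrite lee_fin; case: (bz z).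
rewrite e1 e2 e3 in ineq.
have fa : \int[D]_z (S z * S z)%:E \is a fin_num.
  apply: fin01 => // z; case: (bz z) => S0 S1 _ _; first by rewrite mulr_ge0.
  by rewrite mulr_ile1.
have fb : \int[D]_z (S z)%:E \is a fin_num.
  by apply: fin01 => // z; case: (bz z).
have fd : \int[D]_z (Dg z)%:E \is a fin_num.
  by apply: fin01 => // z; case: (bz z).
move: ineq; rewrite -(fineK fa) -(fineK fb) -(fineK fd) => ineq.
rewrite -!EFinM -EFinD lee_fin in ineq.
rewrite -(EFinM (2^-1)%R) -EFinB -EFinM lee_fin.
rewrite mulrBr mulrA; lra.
Qed.
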